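(* Let $\beta>0$, $F>0$, and $(f_{0,k})_{k\ge1}$ with $\sum_k k^{2\beta}f_{0,k}^2\le F^2$. For $n\ge1$ let $X_k=f_{0,k}+n^{-1/2}\xi_k$, $k\ge1$, with $\xi_k$ i.i.d. $\mathcal N(0,1)$. Let $K_n=n^{1/(2\beta+1)}$, $N:=\{k:|f_{0,k}|\le1/\sqrt n\}$, and for $k\ge1,\ell\ge0$, $$A_{k,\ell}:=\Big\{|X_k|\le\sqrt{\tfrac{4\log(n(\ell+1)^2)}{n}}\Big\},\qquad A_n:=\bigcap_{K_n<k\le n,\,k\in N}A_{k,0}\ \cap\ \bigcap_{\ell\ge1}\ \bigcap_{\ell n<k\le(\ell+1)n,\,k\in N}A_{k,\ell}.$$ Then $P_{f_0}(A_n^c)\to0$ as $n\to\infty$.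
   Context: $P_{f_0}$ is the law of $(X_k)_{k\ge1}$ in the stated sequence model. *)

(* Defs.v *)
From HB Require Import structures.
From mathcomp Require Import all_boot all_order all_algebra.
From mathcomp Require Import all_classical all_reals all_analysis.
Set Implicit Arguments. Unset Strict Implicit. Unset Printing Implicit Defensive.
Import Order.TTheory GRing.Theory Num.Theory.
Local Open Scope classical_set_scope.
Local Open Scope ring_scope.

Definition mutually_independent d (T : measurableType d) (R : realType)
  (P : probability T R) (xi : nat -> {RV P >-> R}) (I : set nat) : Prop :=
  forall (J : seq nat), uniq J -> (forall j, j \in J -> I j) ->
  forall B : nat -> set R, (forall j, measurable (B j)) ->
  P (\bigcap_(j in [set j | j \in J]) (xi j @^-1` B j)) =
  (\prod_(j <- J) P (xi j @^-1` B j))%E.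

Definition iid_std_normal d (T : measurableType d) (R : realType)
  (P : probability T R) (xi : nat -> {RV P >-> R}) : Prop :=
  mutually_independent xi [set k | (1 <= k)%N] /\
  forall k, (1 <= k)%N -> forall A : set R, measurable A ->
    distribution P (xi k) A = normal_prob 0 1 A.

Definition obs d (T : measurableType d) (R : realType) (P : probability T R)
  (f0 : nat -> R) (xi : nat -> {RV P >-> R}) (n k : nat) (w : T) : R :=
  f0 k + (Num.sqrt (n%:R))^-1 * xi k w.

Definition A_kl d (T : measurableType d) (R : realType) (P : probability T R)
  (f0 : nat -> R) (xi : nat -> {RV P >-> R}) (n k l : nat) : set T :=
  [set w | `|obs f0 xi n k w| <=
           Num.sqrt (4 * ln (n%:R * (l.+1)%:R ^+ 2) / n%:R)].

Definition K_n (R : realType) (beta : R) (n : nat) : R :=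
  powR (n%:R) (1 / (2 * beta + 1)).

Definition small_set (R : realType) (f0 : nat -> R) (n : nat) : set nat :=
  [set k | `|f0 k| <= 1 / Num.sqrt (n%:R)].

Definition A_n d (T : measurableType d) (R : realType) (P : probability T R)
  (beta : R) (f0 : nat -> R) (xi : nat -> {RV P >-> R}) (n : nat) : set T :=
  (\bigcap_(k in [set k : nat | K_n beta n < k%:R /\ (k <= n)%N /\
                                small_set f0 n k]) A_kl f0 xi n k 0)
  `&`
  (\bigcap_(l in [set l : nat | (1 <= l)%N])
     \bigcap_(k in [set k : nat | (l * n < k)%N /\ (k <= l.+1 * n)%N /\
                                  small_set f0 n k]) A_kl f0 xi n k l).

(* Main.v *)
Require Import Defs.
From HB Require Import structures.
From mathcomp Require Import all_boot all_order all_algebra.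
From mathcomp Require Import all_classical all_reals all_analysis.
From mathcomp Require Import ring lra zify measurable_realfun.
Import Order.TTheory GRing.Theory Num.Theory.
Local Open Scope classical_set_scope.
Local Open Scope ring_scope.
Lemma mS (R : realType) (s : R) : measurable [set x : R | s <= `|x|].
Proof.
rewrite -[X in measurable X]setTI.
have -> : [set x : R | s <= `|x|] = Num.Def.normr @^-1` `[s, +oo[.
  by apply/seteqP; split => x /=; rewrite in_itv /= andbT.
exact: measurable_realfun.normr_measurable.
Qed.

Lemma pdf_bound (R : realType) (s x : R) : 0 <= s -> s <= `|x| ->
  normal_pdf 0 1 x <= expR (- (s ^+ 2) / 2) * (normal_pdf s 1 x + normal_pdf (-s) 1 x).
Proof.
move=> s0 sx.
rewrite !normal_pdfE ?oner_neq0 //= /normal_fun.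
rewrite expr1n mulr2n subr0 mulrDr.
have hp := normal_peak_ge0 (1:R).
have key : forall y : R, 0 <= s * y - s ^+ 2 ->
   expR (- y ^+ 2 / (1 + 1)) <= expR (- s ^+ 2 / 2) * expR (- (y - s) ^+ 2 / (1 + 1)).
  move=> y hy; rewrite -expRD ler_expR.
  have -> : (1 + 1 : R) = 2 by [].
  nra.
case: (lerP 0 x) => x0.
- have h1 := key x.
  rewrite ger0_norm // in sx.
  apply: le_trans; last first.
    apply: lerD; last first.
      apply: (_ : 0 <= _). rewrite mulr_ge0 // mulr_ge0 // expR_ge0 //.
    exact: lexx.
  rewrite addr0 mulrCA; apply: ler_wpM2l => //.
  apply: h1; nra.
- rewrite ltr0_norm // in sx.
  have h1 := key (- x).
  apply: le_trans; last first.
    apply: lerD; first by apply: (_ : 0 <= _); rewrite mulr_ge0 // mulr_ge0 // expR_ge0.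
    exact: lexx.
  rewrite add0r mulrCA; apply: ler_wpM2l => //.
  have e1 : (x - - s) ^+ 2 = (- x - s) ^+ 2 by ring.
  have e2 : x ^+ 2 = (- x) ^+ 2 by ring.
  rewrite e1 e2; apply: key; nra.
Qed.

Lemma gauss_tail (R : realType) (s : R) : 0 <= s ->
  (normal_prob 0 1 [set x : R | (s <= `|x|)%R] <= (2 * expR (- (s ^+ 2) / 2))%:E)%E.
Proof.
move=> s0.
set S := [set x : R | s <= `|x|].
set e := expR (- (s ^+ 2) / 2).
have mS' : measurable S by exact: mS.
have mp : forall m : R, measurable_fun S (EFin \o normal_pdf m 1).
  by move=> m; apply/measurable_EFinP; apply: measurable_funTS; exact: measurable_normal_pdf.
rewrite /normal_prob.
apply: (@le_trans _ _ (\int[lebesgue_measure]_(x in S) (e%:E * ((normal_pdf s 1 x)%:E + (normal_pdf (-s) 1 x)%:E)))%E).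
  apply: ge0_le_integral => //.
  - by move=> x _; rewrite lee_fin normal_pdf_ge0.
  - exact: mp.
  - have -> : (fun x => e%:E * ((normal_pdf s 1 x)%:E + (normal_pdf (-s) 1 x)%:E))%E =
              (fun x => (e * (normal_pdf s 1 x + normal_pdf (-s) 1 x))%:E).
      by apply/funext => x; rewrite -EFinD -EFinM.
    apply/measurable_EFinP; apply: measurable_funM => //.
    by apply: measurable_funD; apply: measurable_funTS; exact: measurable_normal_pdf.
  - by move=> x Sx; rewrite -EFinD -EFinM lee_fin; apply: pdf_bound.
rewrite ge0_integralZl //; try solve [apply: emeasurable_funD; exact: mp
  | by move=> x _; rewrite adde_ge0 // lee_fin normal_pdf_ge0
  | by rewrite lee_fin expR_ge0].
rewrite ge0_integralD //; try solve [exact: mp | by move=> x _; rewrite lee_fin normal_pdf_ge0].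
rewrite mulrC EFinM lee_pmul2l ?lte_fin ?expR_gt0 //.
have h1 := probability_le1 (normal_prob s 1) mS'.
have h2 := probability_le1 (normal_prob (-s) 1) mS'.
rewrite /normal_prob in h1 h2.
apply: (le_trans (leeD h1 h2)). first [by rewrite -EFinD | by [] | by rewrite lee_fin].
Qed.
Lemma bound_real (R : realType) (n l : nat) : (1 <= n)%N ->
  forall m t s : R, m = n%:R * (l.+1)%:R ^+ 2 ->
  t = Num.sqrt (4 * ln m / n%:R) * Num.sqrt n%:R ->
  s = (if 1 <= t then t - 1 else 0) ->
  2 * expR (- (s ^+ 2) / 2) <= 2 * expR (3/2) * expR (- (ln (n%:R : R) / 2)) / m.
Proof.
move=> n1 m t s -> -> ->.
set m' := _ * _ ^+ 2. set t' := _ * Num.sqrt _. set s' := if _ then _ else _.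
clear m t s. rename m' into m. rename t' into t. rename s' into s.
have n1R : (1 : R) <= n%:R by rewrite ler1n.
have l1R : (1 : R) <= (l.+1)%:R ^+ 2 by rewrite exprn_ege1 // ler1n.
have m1 : 1 <= m by rewrite -[1]mul1r ler_pM.
have m0 : 0 < m by apply: lt_le_trans m1.
have n0 : (0 : R) < n%:R by apply: lt_le_trans n1R.
have lnm0 : 0 <= ln m by exact: ln_ge0.
have lnnm : ln (n%:R : R) <= ln m.
  rewrite ler_ln ?posrE //; rewrite -[X in X <= _]mulr1 ler_pM //; exact: ltW.
have t0 : 0 <= t by rewrite mulr_ge0 // sqrtr_ge0.
have h4 : 0 <= 4 * ln m / n%:R by rewrite divr_ge0 ?mulr_ge0 // ltW.
have t2 : t ^+ 2 = 4 * ln m.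
  by rewrite /t exprMn !sqr_sqrtr // ?ltW // divfK // gt_eqF.
have hs : - (s ^+ 2) / 2 <= 3 / 2 + (- ln m + - (ln m / 2)).
  have lnmE : ln m = t ^+ 2 / 4 by rewrite t2 [4 * _]mulrC mulfK.
  rewrite lnmE /s; case: ifP => ht.
    have := sqr_ge0 (t - 4); rewrite !expr2 => h4'.
    rewrite ?expr2; lra.
  move/negbT: ht; rewrite -ltNge => ht.
  rewrite expr2 mul0r; have : t * t <= 1 by nra.
  lra.
have e1 : expR (3 / 2 + (- ln m + - (ln m / 2))) = expR (3/2) * (expR (- (ln m / 2)) / m).
  rewrite !expRD; congr (_ * _); rewrite expRN lnK ?posrE // mulrC //.
rewrite -!mulrA ler_pM2l //.
apply: (@le_trans _ _ (expR (3 / 2 + (- ln m + - (ln m / 2))))); first by rewrite ler_expR.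
rewrite e1 ler_pM2l ?expR_gt0 // ler_pM2r ?invr_gt0 // ler_expR lerN2 ler_pM2r //.
Qed.

Lemma incl (R : realType) (n : nat) (a r x : R) : (1 <= n)%N ->
  `|a| <= 1 / Num.sqrt n%:R -> r < `|a + (Num.sqrt n%:R)^-1 * x| ->
  (if 1 <= r * Num.sqrt n%:R then r * Num.sqrt n%:R - 1 else 0) <= `|x|.
Proof.
move=> n1 ha hr.
have q0 : 0 < Num.sqrt (n%:R : R) by rewrite sqrtr_gt0 ltr0n.
set q := Num.sqrt (n%:R : R) in q0 ha hr *.
have h1 : `|a + q^-1 * x| <= `|a| + q^-1 * `|x|.
  by rewrite (le_trans (ler_normD _ _)) // normrM ger0_norm // invr_ge0 ltW.
have h2 : r * q < 1 + `|x|.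
  rewrite -ltr_pdivlMr // mulrDl div1r mulrC.
  apply: (lt_le_trans hr); apply: (le_trans h1); rewrite lerD2r.
  by rewrite -div1r.
case: ifP => _; last exact: normr_ge0.
lra.
Qed.

Lemma A_kl_meas d (T : measurableType d) (R : realType) (P : probability T R)
  (f0 : nat -> R) (xi : nat -> {RV P >-> R}) (n k l : nat) :
  measurable (A_kl f0 xi n k l).
Proof.
rewrite /A_kl /obs.
set c := (Num.sqrt (n%:R : R))^-1. set r := Num.sqrt _.
have -> : [set w | `|f0 k + c * xi k w| <= r] =
    xi k @^-1` ((fun x => `|f0 k + c * x|) @^-1` `]-oo, r]).
  by apply/seteqP; split => w /=; rewrite in_itv /=.
apply: measurable_funPTI.
have mf : measurable_fun setT (fun x : R => `|f0 k + c * x|).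
  have -> : (fun x : R => `|f0 k + c * x|) = Num.Def.normr \o (fun x : R => f0 k + c * x) by [].
  apply: measurableT_comp.
    exact: measurable_realfun.normr_measurable.
  apply: measurable_funD => //; exact: measurable_funM.
rewrite -[X in measurable X]setTI; exact: mf.
Qed.

Lemma probH d (T : measurableType d) (R : realType) (P : probability T R)
  (f0 : nat -> R) (xi : nat -> {RV P >-> R}) (n k l : nat) :
  (forall k, (1 <= k)%N -> forall A : set R, measurable A ->
    distribution P (xi k) A = normal_prob 0 1 A) ->
  (1 <= n)%N -> (1 <= k)%N ->
  (P (~` A_kl f0 xi n k l `&` [set _ | small_set f0 n k]) <=
   (2 * expR (3/2) * expR (- (ln (n%:R : R) / 2)) / (n%:R * (l.+1)%:R ^+ 2))%:E)%E.
Proof.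
move=> Hd n1 k1.
set m : R := n%:R * (l.+1)%:R ^+ 2.
set r : R := Num.sqrt (4 * ln m / n%:R).
set t : R := r * Num.sqrt n%:R.
set s : R := if 1 <= t then t - 1 else 0.
have hb := @bound_real R n l n1 m t s erefl erefl erefl.
have m0 : 0 < m by rewrite mulr_gt0 ?exprn_gt0 ?ltr0n.
have b0 : 0 <= 2 * expR (3/2) * expR (- (ln (n%:R : R) / 2)) / m.
  by rewrite divr_ge0 ?mulr_ge0 ?expR_ge0 // ltW.
case: (pselect (small_set f0 n k)) => hk; last first.
  have -> : [set _ : T | small_set f0 n k] = set0 by apply/seteqP; split => w.
  by rewrite setI0 measure0 lee_fin.
have -> : [set _ : T | small_set f0 n k] = setT by apply/seteqP; split => w.
rewrite setIT.
have s0 : 0 <= s by rewrite /s; case: ifP => // /[dup] h _; rewrite subr_ge0.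
have mB := @mS R s.
apply: (@le_trans _ _ (P (xi k @^-1` [set x : R | (s <= `|x|)%R]))).
  apply: le_measure.
  - rewrite inE; apply: measurableC; exact: A_kl_meas.
  - rewrite inE; exact: measurable_funPTI.
  move=> w /= hw.
  apply: (@incl R n (f0 k) r (xi k w) n1 hk).
  by rewrite ltNge; apply/negP.
have := Hd k k1 _ mB; rewrite /distribution /pushforward => ->.
have gt := @gauss_tail R s s0. apply: (le_trans gt). by rewrite lee_fin.
Qed.

Lemma sum_inv_sq (R : realType) (N : nat) :
  \sum_(0 <= l < N.+1) ((l.+1)%:R ^+ 2 : R)^-1 <= 2 - (N.+1)%:R^-1.
Proof.
elim: N => [|N IH].
  by rewrite big_nat1 expr1n invr1; lra.
rewrite big_nat_recr //=.
apply: (le_trans (lerD IH (lexx _))).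
have h0 : (0 : R) < N.+1%:R by rewrite ltr0n.
set a : R := N.+1%:R.
have -> : (N.+2%:R : R) = a + 1 by rewrite /a -natr1.
have a1 : 1 <= a by rewrite /a ler1n.
rewrite -addrA lerD2l.
have ha : 0 < a + 1 by lra.
have e : a^-1 - (a + 1)^-1 = (a * (a + 1))^-1.
  by field; apply/andP; split; rewrite gt_eqF //; lra.
have h : ((a + 1) ^+ 2)^-1 <= (a * (a + 1))^-1.
  rewrite lef_pV2 ?posrE ?mulr_gt0 ?exprn_gt0 //; lra.
apply: (le_trans (lerD (lexx _) h)); by rewrite -e addrA addNr add0r.
Qed.

Lemma series_bound (R : realType) (c : R) : 0 <= c ->
  (\sum_(0 <= l <oo) (c / (l.+1)%:R ^+ 2)%:E <= (c * 2)%:E)%E.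
Proof.
move=> c0.
apply: lime_le.
  by apply: is_cvg_nneseries => l _ _; rewrite lee_fin divr_ge0 // exprn_ge0.
apply: nearW => N.
rewrite sumEFin lee_fin.
have -> : \sum_(0 <= i < N) c / (i.+1)%:R ^+ 2 = c * \sum_(0 <= i < N) ((i.+1)%:R ^+ 2 : R)^-1.
  by rewrite mulr_sumr.
apply: ler_wpM2l => //.
case: N => [|N]; first by rewrite big_geq.
apply: (le_trans (sum_inv_sq R N)).
by rewrite lerBlDr lerDl invr_ge0.
Qed.

Lemma bigcap_meas d (T : measurableType d) (F : nat -> set T) (Q : set nat) :
  (forall k, measurable (F k)) -> measurable (\bigcap_(i in Q) F i).
Proof.
move=> mF; have [->|/set0P h] := eqVneq Q set0; first by rewrite bigcap_set0.
exact: bigcap_measurable.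
Qed.

Lemma const_meas d (T : measurableType d) (Q : Prop) : measurable [set _ : T | Q].
Proof.
case: (pselect Q) => hQ.
  by have -> : [set _ : T | Q] = setT by apply/seteqP; split.
by have -> : [set _ : T | Q] = set0 by apply/seteqP; split.
Qed.

Lemma key d (T : measurableType d) (R : realType) (P : probability T R)
  (beta : R) (f0 : nat -> R) (xi : nat -> {RV P >-> R}) (n : nat) :
  (forall k, (1 <= k)%N -> forall A : set R, measurable A ->
    distribution P (xi k) A = normal_prob 0 1 A) ->
  (1 <= n)%N ->
  (P (~` A_n beta f0 xi n) <=
   ((2 * expR (3/2) * expR (- (ln (n%:R : R) / 2))) * 2)%:E)%E.
Proof.
move=> Hd n1.
set c : R := 2 * expR (3/2) * expR (- (ln (n%:R : R) / 2)).
have c0 : 0 <= c by rewrite /c !mulr_ge0 ?expR_ge0.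
pose H l i := ~` A_kl f0 xi n (l * n + i).+1 l `&` [set _ : T | small_set f0 n (l * n + i).+1].
pose E l := \big[setU/set0]_(i < n) H l i.
have mH : forall l i, measurable (H l i).
  move=> l i; apply: measurableI; last exact: const_meas.
  apply: measurableC; exact: A_kl_meas.
have mE : forall l, measurable (E l) by move=> l; apply: bigsetU_measurable => i _; exact: mH.
have mA : measurable (~` A_n beta f0 xi n).
  apply: measurableC; apply: measurableI; apply: bigcap_meas => // l.
    exact: A_kl_meas.
  apply: bigcap_meas => k; exact: A_kl_meas.
have sub : ~` A_n beta f0 xi n `<=` \bigcup_l E l.
  move=> w /= hw.
  have memE : forall l k, (l * n < k)%N -> (k <= l.+1 * n)%N -> small_set f0 n k ->
      ~ A_kl f0 xi n k l w -> (\bigcup_l E l) w.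
    move=> l k h1 h2 hs hA; exists l => //.
    rewrite /E -bigcup_mkord; exists (k - l * n).-1; first by rewrite /=; lia.
    rewrite /H; have -> : (l * n + (k - l * n).-1).+1 = k by lia.
    by split.
  apply: contrapT => hne; apply: hw; split.
  - move=> k /= [hK [hkn hs]]; apply: contrapT => hA; apply: hne.
    apply: (memE 0%N k) => //; last by rewrite mul1n.
    rewrite mul0n -(ltr_nat R); apply: le_lt_trans hK.
    exact: powR_ge0.
  - move=> l /= hl k /= [h1 [h2 hs]]; apply: contrapT => hA; apply: hne.
    exact: (memE l k).
apply: (le_trans (measure_sigma_subadditive P mE mA sub)).
apply: le_trans (@series_bound R c c0).
apply: lee_nneseries => [l _ _|l _]; first exact: measure_ge0.
apply: (le_trans (Boole_inequality P (fun i _ => mH l i))).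
apply: (@le_trans _ _ (\sum_(i < n) (c / (n%:R * (l.+1)%:R ^+ 2))%:E)%E).
  apply: lee_sum => i _.
  apply: probH => //.
rewrite sumEFin lee_fin sumr_const card_ord.
have n0 : (n%:R : R) != 0 by rewrite pnatr_eq0 -lt0n.
have l0 : ((l.+1)%:R ^+ 2 : R) != 0 by rewrite expf_neq0 // pnatr_eq0.
rewrite -(mulr_natr (c / _) n).
have -> : c / (n%:R * (l.+1)%:R ^+ 2) * n%:R = c / (l.+1)%:R ^+ 2.
  field; rewrite n0 andbT; have : (0 : R) < 1 + l%:R by rewrite ltr_pwDl //. by move/gt_eqF ->.
exact: lexx.
Qed.

Lemma ln_half_cvg (R : realType) :
  (fun n : nat => ln (n%:R : R) / 2) @ \oo --> +oo.
Proof.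
apply/cvgryPge => A.
near=> n.
rewrite ler_pdivlMr // -ler_expR lnK; last first.
  rewrite posrE ltr0n; near: n; exact: nbhs_infty_gt.
near: n; exact: nbhs_infty_ger.
Unshelve. all: end_near.
Qed.

Theorem mainTheorem7 (R : realType) (beta F : R) (f0 : nat -> R)
  (d : measure_display) (T : measurableType d) (P : probability T R)
  (xi : nat -> {RV P >-> R}) :
  0 < beta -> 0 < F ->
  (\sum_(1 <= k <oo) (powR (k%:R) (2 * beta) * f0 k ^+ 2)%:E <= (F ^+ 2)%:E)%E ->
  iid_std_normal xi ->
  (P (~` A_n beta f0 xi n) @[n --> \oo] --> 0%E)%E.
Proof.
move=> _ _ _ [_ Hd].
apply: (@squeeze_cvge _ _ _ _ (cst 0%E) _
  (fun n : nat => ((2 * expR (3/2) * expR (- (ln (n%:R : R) / 2))) * 2)%:E)).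
- near=> n; rewrite measure_ge0 /=; apply: key => //.
  near: n; exists 1%N => //.
- exact: cvg_cst.
- have h : expR (- (ln (n%:R : R) / 2)) @[n --> \oo] --> 0%R.
    apply: (@cvg_comp _ _ _ (fun n : nat => ln (n%:R : R) / 2) (fun x : R => expR (- x)) _ _ _ (@ln_half_cvg R)); exact: cvgr_expR.
  have h2 : 2 * expR (3/2) * expR (- (ln (n%:R : R) / 2)) * 2 @[n --> \oo] --> 0%R.
    rewrite -(mul0r 2) -(mulr0 (2 * expR (3/2))).
    apply: cvgMr_tmp; apply: cvgMl_tmp; exact: h.
  apply: cvg_EFin; first exact: nearW.
  exact: h2.
Unshelve. all: end_near.
Qed.
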